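(* Let $\lambda>0$, $\ell>0$, $a_1,a_2,a_3\in\mathbb{R}$, fix $z>0$, and consider the map $(x_0,y_0)\mapsto(x,y)$ given by $$x=x_0+\frac{\lambda z}{2\pi\ell}\left(a_1+2a_3\frac{x_0}{\ell}-2\frac{x_0y_0}{\ell^2}\right),\qquad y=y_0+\frac{\lambda z}{2\pi\ell}\left(a_2+\frac{3y_0^2-x_0^2}{\ell^2}\right).$$ Let $A'\doteq a_3+\frac{4\pi\ell^2}{3\lambda z}$. Then the set of caustic points of this map (points $(x,y)$ that are images of some $(x_0,y_0)$ at which the Jacobian determinant $\det\partial(x,y)/\partial(x_0,y_0)$ vanishes) is the closed curve $\zeta\in[0,2\pi)\mapsto(x_c(\zeta),y_c(\zeta))$ with $$x_c(\zeta)=a_1\frac{\lambda z}{2\pi\ell}+\frac{\sqrt3\,\lambda z}{2\pi\ell}A'^2\sin^2\!\left(\frac{\zeta}{2}\right)\sin(\zeta),$$ $$y_c(\zeta)=a_2\frac{\lambda z}{2\pi\ell}-\frac{\pi\ell^3}{6\lambda z}+\frac{3\lambda z}{2\pi\ell}A'^2\cos^2\!\left(\frac{\zeta}{2}\right)\cos(\zeta).$$ *)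

(* Defs.v *)
From Stdlib Require Import Reals.
From Coquelicot Require Import Coquelicot.
Open Scope R_scope.

Definition map_x (lam l a1 a3 z : R) (x0 y0 : R) : R :=
  x0 + lam * z / (2 * PI * l) * (a1 + 2 * a3 * x0 / l - 2 * x0 * y0 / l ^ 2).

Definition map_y (lam l a2 z : R) (x0 y0 : R) : R :=
  y0 + lam * z / (2 * PI * l) * (a2 + (3 * y0 ^ 2 - x0 ^ 2) / l ^ 2).

Definition jac_det (F G : R -> R -> R) (x0 y0 : R) : R :=
  Derive (fun t => F t y0) x0 * Derive (fun t => G x0 t) y0
  - Derive (fun t => F x0 t) y0 * Derive (fun t => G t y0) x0.

Definition caustic_set (F G : R -> R -> R) (p : R * R) : Prop :=
  exists x0 y0 : R, jac_det F G x0 y0 = 0 /\ p = (F x0 y0, G x0 y0).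

(* Main.v *)
Require Import Defs.
From Stdlib Require Import Reals Lra Psatz.
From Coquelicot Require Import Coquelicot.
Open Scope R_scope.

Lemma angle (a b : R) : a^2 + b^2 = 1 ->
  exists t, 0 <= t < 2*PI /\ cos t = a /\ sin t = b.
Proof.
  intros H. assert (Ha : -1 <= a <= 1) by nra.
  pose proof (acos_bound a). pose proof PI_RGT_0.
  assert (Hs : 1 - a² = b²) by (unfold Rsqr; lra).
  destruct (Rle_lt_dec 0 b) as [Hb|Hb].
  - exists (acos a). split; [lra|]. split; [now apply cos_acos|].
    rewrite sin_acos by lra. rewrite Hs. now apply sqrt_Rsqr.
  - assert (acos a <> 0).
    { intros E. assert (a = 1) by (rewrite <- (cos_acos a Ha), E; apply cos_0). nra. }
    exists (2*PI - acos a). split; [lra|].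
    rewrite cos_minus, sin_minus, cos_2PI, sin_2PI, cos_acos, sin_acos by lra.
    rewrite Hs. rewrite (Rsqr_neg b), sqrt_Rsqr by lra. split; lra.
Qed.
Lemma jac (lam l a1 a2 a3 z x0 y0 : R) : l <> 0 ->
  let c := lam*z/(2*PI*l) in
  jac_det (map_x lam l a1 a3 z) (map_y lam l a2 z) x0 y0 =
  (1 + c*(2*a3/l - 2*y0/l^2))*(1 + c*(6*y0/l^2)) - (c*(-2*x0/l^2))*(c*(-2*x0/l^2)).
Proof.
  intros Hl c. unfold jac_det.
  assert (PI <> 0) by (pose proof PI_RGT_0; lra).
  assert (E1 : Derive (fun t => map_x lam l a1 a3 z t y0) x0 = 1 + c*(2*a3/l - 2*y0/l^2)).
  { apply is_derive_unique. unfold map_x, c; auto_derive; [repeat split; auto | field; auto]. }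
  assert (E2 : Derive (fun t => map_y lam l a2 z x0 t) y0 = 1 + c*(6*y0/l^2)).
  { apply is_derive_unique. unfold map_y, c; auto_derive; [repeat split; auto | field; auto]. }
  assert (E3 : Derive (fun t => map_x lam l a1 a3 z x0 t) y0 = c*(-2*x0/l^2)).
  { apply is_derive_unique. unfold map_x, c; auto_derive; [repeat split; auto | field; auto]. }
  assert (E4 : Derive (fun t => map_y lam l a2 z t y0) x0 = c*(-2*x0/l^2)).
  { apply is_derive_unique. unfold map_y, c; auto_derive; [repeat split; auto | field; auto]. }
  rewrite E1, E2, E3, E4. reflexivity.
Qed.

Lemma det0 c l a3 x0 y0 K co : c <> 0 -> l <> 0 -> K = c*(a3 + 2*l/(3*c))/(2*l) ->
  x0*x0 = (l^2/c)^2*3*K^2*(1-co^2) -> y0 = l^2/c*(K-1/6+K*co) ->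
  (1 + c*(2*a3/l - 2*y0/l^2))*(1 + c*(6*y0/l^2)) - (c*(-2*x0/l^2))*(c*(-2*x0/l^2)) = 0.
Proof.
  intros Hc Hl HK H1 H2.
  replace ((c*(-2*x0/l^2))*(c*(-2*x0/l^2))) with (4*c^2/l^4*(x0*x0)) by (field; auto).
  rewrite H1, H2, HK. field; auto.
Qed.

Lemma circ c l a3 x0 y0 K : c <> 0 -> l <> 0 -> K = c*(a3 + 2*l/(3*c))/(2*l) ->
  (1 + c*(2*a3/l - 2*y0/l^2))*(1 + c*(6*y0/l^2)) - (c*(-2*x0/l^2))*(c*(-2*x0/l^2)) = 0 ->
  12*(c*y0/l^2 - K + 1/6)^2 + 4*(c*x0/l^2)^2 = 12*K^2.
Proof.
  intros Hc Hl HK H.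
  assert (E : 12*(c*y0/l^2 - K + 1/6)^2 + 4*(c*x0/l^2)^2 - 12*K^2 =
    - ((1 + c*(2*a3/l - 2*y0/l^2))*(1 + c*(6*y0/l^2)) - (c*(-2*x0/l^2))*(c*(-2*x0/l^2))))
    by (rewrite HK; field; auto).
  lra.
Qed.

Lemma mapx c l a1 a3 A x0 y0 K r s co : c <> 0 -> l <> 0 -> A = a3 + 2*l/(3*c) ->
  K = c*A/(2*l) -> x0 = l^2/c*(r*K*s) -> y0 = l^2/c*(K-1/6+K*co) ->
  x0 + c*(a1 + 2*a3*x0/l - 2*x0*y0/l^2) = a1*c + r*c*A^2*((1-co)/2)*s.
Proof. intros Hc Hl HA HK H1 H2. subst. field; auto. Qed.

Lemma mapy c l a2 a3 A x0 y0 K co : c <> 0 -> l <> 0 -> A = a3 + 2*l/(3*c) ->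
  K = c*A/(2*l) -> x0*x0 = (l^2/c)^2*3*K^2*(1-co^2) -> y0 = l^2/c*(K-1/6+K*co) ->
  y0 + c*(a2 + (3*y0^2 - x0^2)/l^2) = a2*c - l^2/(12*c) + 3*c*A^2*((1+co)/2)*co.
Proof.
  intros Hc Hl HA HK H1 H2. replace (x0^2) with (x0*x0) by ring. rewrite H1, H2, HK, HA.
  field; auto.
Qed.

Lemma sin_half t : sin (t/2) ^ 2 = (1 - cos t)/2.
Proof. pose proof (cos_2a_sin (t/2)). replace (2*(t/2)) with t in H by field. lra. Qed.
Lemma cos_half t : cos (t/2) ^ 2 = (1 + cos t)/2.
Proof. pose proof (cos_2a_cos (t/2)). replace (2*(t/2)) with t in H by field. lra. Qed.

Theorem mainTheorem8 (lam l a1 a2 a3 z : R) :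
  0 < lam -> 0 < l -> 0 < z ->
  let A' := a3 + 4 * PI * l ^ 2 / (3 * lam * z) in
  forall p : R * R,
    caustic_set (map_x lam l a1 a3 z) (map_y lam l a2 z) p <->
    exists zeta : R, 0 <= zeta < 2 * PI /\
      p = (a1 * (lam * z / (2 * PI * l))
             + sqrt 3 * lam * z / (2 * PI * l) * A' ^ 2 * (sin (zeta / 2)) ^ 2 * sin zeta,
           a2 * (lam * z / (2 * PI * l)) - PI * l ^ 3 / (6 * lam * z)
             + 3 * lam * z / (2 * PI * l) * A' ^ 2 * (cos (zeta / 2)) ^ 2 * cos zeta).
Proof.
  intros Hlam Hl Hz A' p.
  pose proof PI_RGT_0 as HPI.
  assert (Hcp : 0 < lam*z/(2*PI*l)) by (apply Rdiv_lt_0_compat; nra).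
  remember (lam*z/(2*PI*l)) as c eqn:Hcd.
  assert (HA : A' = a3 + 2*l/(3*c)) by (unfold A'; subst c; field; lra).
  clearbody A'.
  assert (Hc0 : c <> 0) by lra. assert (Hl0 : l <> 0) by lra.
  assert (H3 : sqrt 3 * sqrt 3 = 3) by (apply sqrt_sqrt; lra).
  assert (H3p := Rlt_sqrt3_0).
  set (K := c*A'/(2*l)).
  set (X := fun t => l^2/c*(sqrt 3*K*sin t)).
  set (Y := fun t => l^2/c*(K-1/6+K*cos t)).
  assert (HX2 : forall t, X t * X t = (l^2/c)^2*3*K^2*(1-cos t^2)).
  { intro t. unfold X. pose proof (sin2_cos2 t). unfold Rsqr in H.
    replace (l^2/c*(sqrt 3*K*sin t) * (l^2/c*(sqrt 3*K*sin t))) with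
      ((l^2/c)^2*(sqrt 3*sqrt 3)*K^2*(sin t*sin t)) by (field; auto).
    rewrite H3. replace (sin t * sin t) with (1 - cos t * cos t) by lra. ring. }
  assert (HK : K = c*(a3 + 2*l/(3*c))/(2*l)) by (unfold K; now rewrite HA).
  assert (Hpar : forall t, (map_x lam l a1 a3 z (X t) (Y t), map_y lam l a2 z (X t) (Y t)) =
    (a1 * (lam * z / (2 * PI * l))
             + sqrt 3 * lam * z / (2 * PI * l) * A' ^ 2 * (sin (t / 2)) ^ 2 * sin t,
           a2 * (lam * z / (2 * PI * l)) - PI * l ^ 3 / (6 * lam * z)
             + 3 * lam * z / (2 * PI * l) * A' ^ 2 * (cos (t / 2)) ^ 2 * cos t)).
  { intro t. rewrite sin_half, cos_half. unfold map_x, map_y. rewrite <- Hcd. f_equal.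
    - rewrite (mapx c l a1 a3 A' (X t) (Y t) K (sqrt 3) (sin t) (cos t)); auto.
      subst c. field; lra.
    - rewrite (mapy c l a2 a3 A' (X t) (Y t) K (cos t)); auto.
      subst c. field; lra. }
  split.
  - intros [x0 [y0 [Hj Hp]]]. rewrite jac in Hj by auto. rewrite <- Hcd in Hj.
    pose proof (circ c l a3 x0 y0 K Hc0 Hl0 HK Hj) as Hci.
    set (u := c*x0/l^2) in Hci. set (v := c*y0/l^2) in Hci.
    assert (Hx : x0 = l^2/c*u) by (unfold u; field; auto).
    assert (Hy : y0 = l^2/c*v) by (unfold v; field; auto).
    assert (Ht : exists t, 0 <= t < 2*PI /\ u = sqrt 3*K*sin t /\ v = K - 1/6 + K*cos t).
    { destruct (Req_dec K 0) as [K0|K0].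
      - rewrite K0 in Hci. exists 0. split; [lra|]. rewrite K0. pose proof (pow2_ge_0 u). pose proof (pow2_ge_0 (v - 0 + 1/6)).
        assert (u = 0) by (apply Rsqr_0_uniq; unfold Rsqr; nra).
        assert (v - 0 + 1/6 = 0) by (apply Rsqr_0_uniq; unfold Rsqr; nra). rewrite sin_0, cos_0. split; lra.
      - set (a := (v-K+1/6)/K). set (b := u/(sqrt 3*K)).
        assert (Hb2 : b^2 = u^2/(3*K^2)) by (unfold b; replace (3*K^2) with ((sqrt 3*sqrt 3)*K^2) by (rewrite H3; ring); field; split; lra).
        assert (Hab : a^2+b^2 = (12*(v-K+1/6)^2 + 4*u^2)/(12*K^2))
          by (rewrite Hb2; unfold a; field; auto).
        rewrite Hci in Hab. replace (12*K^2/(12*K^2)) with 1 in Hab by (field; auto).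
        destruct (angle a b Hab) as [t [Ht [Hca Hsb]]]. exists t. split; [auto|].
        rewrite Hca, Hsb. unfold a, b. split; field; try split; lra. }
    destruct Ht as [t [Ht [Hu Hv]]]. exists t. split; [auto|].
    rewrite Hcd, Hp, <- Hpar. f_equal; f_equal; unfold X, Y; congruence.
  - intros [t [Ht Hp]]. exists (X t), (Y t). split.
    + rewrite jac by auto. rewrite <- Hcd. apply (det0 c l a3 (X t) (Y t) K (cos t)); auto.
    + rewrite Hp, Hcd. symmetry. apply Hpar.
Qed.
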